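(* Let $n,k$ be integers with $0<k\le n$, let $f_j(\Delta_{n,k})$ denote the number of $j$-dimensional faces of the polytope $\Delta_{n,k}$ and $f_j(\Delta'_{n,k})$ the number of $j$-dimensional faces of the half-open hypersimplex $\Delta'_{n,k}$. Then $f_0(\Delta_{n,k})=\binom{n}{k}+\binom{n}{k-1}$, and for $j=1,2,\ldots,n$, $$ f_j(\Delta_{n,k})=f_j(\Delta'_{n,k})+\binom{n}{j+1}\sum_{s=\max\{0,k-1-j\}}^{k-2}\binom{n-j-1}{s}=\binom{n+1}{j+1}\sum_{s=\max\{0,k-j\}}^{k-1}\binom{n-j}{s}. $$
   Context: For integers $0<k\le n$, $\Delta_{n,k}=\{(x_1,\ldots,x_n)\in[0,1]^n : k-1\le x_1+\cdots+x_n\le k\}$ (a convex polytope) and $\Delta'_{n,k}=\{(x_1,\ldots,x_n)\in[0,1]^n : k-1< x_1+\cdots+x_n\le k\}$. A $j$-face of $\Delta'_{n,k}$ is a set $F\cap\Delta'_{n,k}$ where $F$ is a $j$-dimensional face of $\Delta_{n,k}$ with $F\cap\Delta'_{n,k}\neq\emptyset$. Binomial coefficients $\binom{a}{b}$ are $0$ when $b>a$ or $b<0$, and an empty sum is $0$. *)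

(* Defs.v *)
From mathcomp Require Import all_boot all_order all_algebra.
From mathcomp Require Import reals.
Import GRing.Theory Num.Theory.



Unset Printing Implicit Defensive.

Local Open Scope ring_scope.

Definition dotv (R : pzRingType) (n : nat) (a x : 'rV[R]_n) : R :=
  \sum_(i < n) a ord0 i * x ord0 i.

Definition hypersimplex (R : realType) (n k : nat) (x : 'rV[R]_n) : Prop :=
  (forall i : 'I_n, 0 <= x ord0 i <= 1) /\
  (k%:R - 1 <= \sum_(i < n) x ord0 i) /\ (\sum_(i < n) x ord0 i <= k%:R).

Definition half_open_hypersimplex (R : realType) (n k : nat) (x : 'rV[R]_n) : Prop :=
  (forall i : 'I_n, 0 <= x ord0 i <= 1) /\
  (k%:R - 1 < \sum_(i < n) x ord0 i) /\ (\sum_(i < n) x ord0 i <= k%:R).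

(** F is a face of the convex polytope P: F = P ∩ {a.x = b} for a valid
    inequality a.x <= b on P (a = 0 gives P itself and the empty face). *)
Definition is_face (R : realType) (n : nat) (P F : 'rV[R]_n -> Prop) : Prop :=
  exists (a : 'rV[R]_n) (b : R),
    (forall x, P x -> dotv R n a x <= b) /\
    (forall x, F x <-> (P x /\ dotv R n a x = b)).

Definition aff_dim (R : realType) (n : nat) (S : 'rV[R]_n -> Prop) (j : nat) : Prop :=
  (exists x : 'I_j.+1 -> 'rV[R]_n, (forall i, S (x i)) /\
      \rank (\matrix_(i < j) (x (lift ord0 i) - x ord0)) = j) /\
  (forall (m : nat) (x : 'I_m.+1 -> 'rV[R]_n), (forall i, S (x i)) ->
      (\rank (\matrix_(i < m) (x (lift ord0 i) - x ord0)) <= j)%N).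

Definition j_face (R : realType) (n : nat) (P : 'rV[R]_n -> Prop) (j : nat)
    (F : 'rV[R]_n -> Prop) : Prop :=
  is_face R n P F /\ aff_dim R n F j.

Definition ho_j_face (R : realType) (n k j : nat) (G : 'rV[R]_n -> Prop) : Prop :=
  exists F : 'rV[R]_n -> Prop,
    j_face R n (hypersimplex R n k) j F /\
    (exists x, F x /\ half_open_hypersimplex R n k x) /\
    (forall x, G x <-> (F x /\ half_open_hypersimplex R n k x)).

(** The family Q of subsets of T (assumed closed under extensional equality)
    has exactly N members, sets being identified up to extensional equality. *)
Definition num_sets (T : Type) (Q : (T -> Prop) -> Prop) (N : nat) : Prop :=
  exists e : 'I_N -> (T -> Prop),
    (forall i, Q (e i)) /\
    (forall i i', (forall x, e i x <-> e i' x) -> i = i') /\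
    (forall F, Q F -> exists i, forall x, F x <-> e i x).

(* Main.v *)
Require Import Defs.
From mathcomp Require Import all_boot all_order all_algebra.
From mathcomp Require Import reals.
From mathcomp Require Import boolp.
From mathcomp Require Import ring lra zify.
Import GRing.Theory Num.Theory Order.TTheory.
Set Implicit Arguments. Unset Strict Implicit. Unset Printing Implicit Defensive.

Local Open Scope ring_scope.


Section Lift.
Variables (R : realType) (n k : nat).
Notation I := 'I_n.+1.
Notation row := 'rV[R]_n.

Definition lc (x : row) (i : I) : R :=
  if unlift ord_max i is Some l then x ord0 l else k%:R - \sum_(l < n) x ord0 l.

Lemma lc_lift x l : lc x (lift ord_max l) = x ord0 l.
Proof. by rewrite /lc liftK. Qed.

Lemma lc_max x : lc x ord_max = k%:R - \sum_(l < n) x ord0 l.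
Proof. by rewrite /lc unlift_none. Qed.

Lemma sum_lift (F : I -> R) : \sum_(i < n.+1) F i = \sum_(l < n) F (lift ord_max l) + F ord_max.
Proof.
rewrite big_ord_recr /=; congr (_ + _); apply: eq_bigr => l _; congr F.
by apply/val_inj; rewrite /= /bump leqNgt ltn_ord.
Qed.

Lemma sum_lc x : \sum_i lc x i = k%:R.
Proof.
rewrite sum_lift lc_max; under eq_bigr do rewrite lc_lift. by rewrite addrC subrK.
Qed.

Lemma hyp_lc x : hypersimplex R n k x <-> forall i, 0 <= lc x i <= 1.
Proof.
rewrite /hypersimplex; split.
  move=> [H1 [H2 H3]] i; case: (unliftP ord_max i) => [l ->|->].
    by rewrite lc_lift.
  rewrite lc_max; apply/andP; split; lra.
move=> H; split; first by move=> i; have := H (lift ord_max i); rewrite lc_lift.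
have := H ord_max; rewrite lc_max => /andP[? ?]; split; lra.
Qed.

Lemma ho_lc x : half_open_hypersimplex R n k x <-> hypersimplex R n k x /\ lc x ord_max < 1.
Proof.
rewrite /half_open_hypersimplex /hypersimplex lc_max; split.
  move=> [H1 [H2 H3]]; split; [split=> //; split; lra| lra].
move=> [[H1 [H2 H3]] H4]; split => //; split; lra.
Qed.

Definition rowpt (g : I -> R) : row := \row_l g (lift ord_max l).

Lemma lc_rowpt g : \sum_i g i = k%:R -> forall i, lc (rowpt g) i = g i.
Proof.
move=> Hs i; case: (unliftP ord_max i) => [l ->|->].
  by rewrite lc_lift mxE.
rewrite lc_max; under eq_bigr do rewrite mxE.
by rewrite -Hs sum_lift addrC addKr.
Qed.

Lemma lc_inj x y : (forall i, lc x i = lc y i) -> x = y.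
Proof.
move=> H; apply/rowP => l; have := H (lift ord_max l); by rewrite !lc_lift.
Qed.

Lemma lc_comb2 (s t : R) x y i : s + t = 1 ->
  lc (s *: x + t *: y) i = s * lc x i + t * lc y i.
Proof.
move=> Hst; case: (unliftP ord_max i) => [l ->|->].
  by rewrite !lc_lift !mxE.
rewrite !lc_max; under eq_bigr do rewrite !mxE.
rewrite big_split /= -!mulr_sumr.
rewrite -[X in X - _ = _]mul1r -Hst; ring.
Qed.

Lemma lc_avg (T : finType) (X : T -> row) (c : R) i : c * #|T|%:R = 1 ->
  lc (c *: \sum_t X t) i = c * \sum_t lc (X t) i.
Proof.
move=> Hc; case: (unliftP ord_max i) => [l ->|->].
  rewrite !lc_lift !mxE summxE; congr (_ * _); apply: eq_bigr => t _; by rewrite lc_lift.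
rewrite !lc_max; under eq_bigr do rewrite !mxE summxE.
under [in RHS]eq_bigr do rewrite lc_max.
rewrite -mulr_sumr sumrB exchange_big /= sumr_const.
rewrite mulrBr -[X in X - _]mul1r -Hc.
rewrite -mulr_natr. ring.
Qed.

Lemma dotv_comb2 (a : row) (s t : R) x y :
  dotv R n a (s *: x + t *: y) = s * dotv R n a x + t * dotv R n a y.
Proof.
rewrite /dotv !mulr_sumr -big_split /=; apply: eq_bigr => l _; rewrite !mxE; ring.
Qed.

Lemma dotv_avg (T : finType) (X : T -> row) (c : R) a :
  dotv R n a (c *: \sum_t X t) = c * \sum_t dotv R n a (X t).
Proof.
rewrite /dotv exchange_big /= mulr_sumr; apply: eq_bigr => l _.
rewrite !mxE summxE !mulr_sumr; apply: eq_bigr => t _; ring.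
Qed.

End Lift.



Section Faces.
Variables (R : realType) (n k : nat).
Notation I := 'I_n.+1.
Notation row := 'rV[R]_n.
Notation lc := (lc k).
Notation hyp := (hypersimplex R n k).

Definition FS (S O : {set I}) (x : row) : Prop :=
  hyp x /\ (forall i, i \notin S -> i \notin O -> lc x i = 0) /\
  (forall i, i \in O -> lc x i = 1).

Definition valid (S O : {set I}) : bool :=
  [disjoint S & O] &&
  (((#|S| == 0%N) && (#|O| == k)) || ((1 < #|S|)%N && (#|O| < k < #|O| + #|S|)%N)).

Definition cg (S O : {set I}) (i : I) : R :=
  if i \in O then 1 else if i \in S then (k - #|O|)%:R / #|S|%:R else 0.

Definition center S O : row := rowpt (cg S O).

Lemma sum_cg S O : valid S O -> \sum_i cg S O i = k%:R.
Proof.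
move=> /andP[Hd Hc].
have -> : \sum_i cg S O i = \sum_(i in O) 1 + \sum_(i in S) ((k - #|O|)%:R / #|S|%:R).
  rewrite big_mkcond [X in _ = X + _]big_mkcond [X in _ = _ + X]big_mkcond -big_split /=.
  apply: eq_bigr => i _; rewrite /cg; case: ifP => HO; case: ifP => HS //.
  - by have := disjointFl Hd HO; rewrite HS.
  - by rewrite addr0.
  - by rewrite add0r.
  - by rewrite addr0.
rewrite !sumr_const.
case/orP: Hc => [/andP[/eqP -> /eqP ->]|/andP[Hs /andP[H1 H2]]].
  by rewrite mulr0n addr0.
rewrite -[_ *+ #|S|]mulr_natr divfK; last by rewrite pnatr_eq0; lia.
rewrite -natrD; congr (_%:R); lia.
Qed.

Lemma lc_center S O i : valid S O -> lc (center S O) i = cg S O i.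
Proof. by move=> Hv; rewrite lc_rowpt // sum_cg. Qed.

Lemma cg_range S O i : valid S O -> i \in S -> 0 < cg S O i < 1.
Proof.
move=> /andP[Hd Hc] HS; rewrite /cg (disjointFr Hd HS) HS.
case/orP: Hc => [/andP[/eqP H0 _]|/andP[Hs /andP[H1 H2]]].
  by move: (card0_eq H0 i); rewrite inE HS.
have Hm : (0 < #|S|%:R :> R) by rewrite ltr0n; lia.
apply/andP; split; first by apply: divr_gt0 => //; rewrite ltr0n; lia.
by rewrite ltr_pdivrMr // mul1r ltr_nat; lia.
Qed.

Lemma FS_center S O : valid S O -> FS S O (center S O).
Proof.
move=> Hv; split; [apply/hyp_lc => i | split => i].
- rewrite lc_center //; have := @cg_range S O i Hv; rewrite /cg.
  case: ifP => _; first by move=> _; apply/andP; lra.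
  case: ifP => HS; last by move=> _; apply/andP; lra.
  by move=> /(_ isT)/andP[? ?]; apply/andP; lra.
- by move=> /negbTE HS /negbTE HO; rewrite lc_center // /cg HS HO.
- by move=> HO; rewrite lc_center // /cg HO.
Qed.

Lemma center_pat S O i : valid S O ->
  ((lc (center S O) i == 1) = (i \in O)) /\
  ((lc (center S O) i == 0) = (i \notin S) && (i \notin O)).
Proof.
move=> Hv; rewrite lc_center //; have := @cg_range S O i Hv; rewrite /cg.
case: ifP => HO.
  by move=> _; rewrite eqxx oner_eq0 andbF.
case: ifP => HS /=.
  move=> /(_ isT)/andP[H1 H2]; split; [by rewrite lt_eqF| by rewrite gt_eqF].
by move=> _; rewrite eqxx eq_sym oner_eq0.
Qed.

Definition wt (S O : {set I}) (i : I) : R := if i \in O then 1 else if i \in S then 0 else -1.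

Lemma FS_face S O : is_face R n hyp (FS S O).
Proof.
pose a : row := \row_l (wt S O (lift ord_max l) - wt S O ord_max).
pose b : R := #|O|%:R - wt S O ord_max * k%:R.
have Ha x : dotv R n a x = \sum_i wt S O i * lc x i - wt S O ord_max * k%:R.
  rewrite sum_lift /dotv lc_max; under eq_bigr do rewrite mxE mulrBl.
  under [in RHS]eq_bigr do rewrite lc_lift.
  rewrite sumrB -mulr_sumr; ring.
have Hle x i : hyp x -> wt S O i * lc x i <= (i \in O)%:R.
  move/hyp_lc/(_ i)/andP => [H0 H1]; rewrite /wt; case: (i \in O) => /=; first lra.
  by case: ifP => _; lra.
have HO : \sum_i (i \in O)%:R = #|O|%:R :> R.
  rewrite (eq_bigr (fun i => if i \in O then 1 else 0)) -?big_mkcond /= ?sumr_const //; by move=> i _; case: (i \in O).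
exists a, b; split.
  move=> x Hx; rewrite Ha /b lerD2r -HO; apply: ler_sum => i _; exact: Hle.
move=> x; split.
  move=> [Hx [H0 H1]]; split => //; rewrite Ha /b; congr (_ - _); rewrite -HO.
  apply: eq_bigr => i _; rewrite /wt; case: ifP => Hi; first by rewrite H1 // mulr1.
  case: ifP => Hs; first by rewrite mul0r.
  by rewrite H0 ?Hs ?Hi // mulr0.
move=> [Hx]; rewrite Ha /b -HO => Heq0.
have Heq : \sum_i wt S O i * lc x i = \sum_i (i \in O)%:R by lra.
have Hz : forall i, (i \in O)%:R - wt S O i * lc x i = 0.
  move=> i; apply: (@psumr_eq0P _ _ xpredT (fun j => (j \in O)%:R - wt S O j * lc x j)) => //.
    by move=> j _; rewrite subr_ge0; apply: Hle.
  by rewrite sumrB Heq subrr.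
split => //; split.
  move=> i /negbTE Hs /negbTE Hi; have := Hz i; rewrite /wt Hs Hi /=; lra.
move=> i Hi; have := Hz i; rewrite /wt Hi /=; lra.
Qed.

End Faces.



Section Dim.
Variables (R : realType) (n k : nat).
Notation I := 'I_n.+1.
Notation row := 'rV[R]_n.
Notation lc := (lc k).
Notation hyp := (hypersimplex R n k).
Notation FS := (@FS R n k).
Notation center := (@center R n k).
Notation cg := (@cg R n k).
Notation valid := (@valid n k).

Lemma aff_dim_uniq (F : row -> Prop) j j' : aff_dim R n F j -> aff_dim R n F j' -> j = j'.
Proof.
move=> [[x [Hx Hr]] Hb] [[x' [Hx' Hr']] Hb'].
have := Hb' _ x Hx; have := Hb _ x' Hx'; rewrite Hr Hr'; lia.
Qed.

Lemma sum_delta (a : I) : \sum_(u : I) (u == a)%:R = 1 :> R.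
Proof.
rewrite (bigD1 a) //= eqxx big1 ?addr0 // => u /negbTE -> //.
Qed.

Lemma sum_delta2 (a b : I) : b != ord_max ->
  \sum_(l < n) (lift ord_max l == a)%:R * (lift ord_max l == b)%:R = (a == b)%:R :> R.
Proof.
case: (unliftP ord_max b) => [lb ->|->]; last by rewrite eqxx.
move=> _; rewrite (bigD1 lb) //= eqxx mulr1 big1 ?addr0.
  by rewrite eq_sym.
by move=> l Hl; rewrite (inj_eq lift_inj) (negbTE Hl) mulr0.
Qed.

Lemma FS_diff S O (x y : row) u : valid S O -> FS S O x -> FS S O y -> u \notin S ->
  lc x u - lc y u = 0.
Proof.
move=> _ [_ [Hx0 Hx1]] [_ [Hy0 Hy1]] Hu.
case: (boolP (u \in O)) => Hi; first by rewrite Hx1 // Hy1 // subrr.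
by rewrite Hx0 // Hy0 // subrr.
Qed.

Lemma aff_dim_FS0 S O : valid S O -> #|S| = 0%N -> aff_dim R n (FS S O) 0.
Proof.
move=> Hv HS0.
have Huniq y : FS S O y -> y = center S O.
  move=> [_ [H0 H1]]; apply: (@lc_inj R n k) => i; rewrite lc_center // /cg.
  have HiS : i \notin S by rewrite (card0_eq HS0).
  rewrite (negbTE HiS); case: ifP => Hi; first exact: H1.
  by apply: H0 => //; rewrite Hi.
split.
  exists (fun _ => center S O); split; first by move=> _; apply: FS_center.
  by apply/eqP; rewrite -leqn0 rank_leq_row.
move=> m x Hx.
have -> : (\matrix_(i < m) (x (lift ord0 i) - x ord0)) = 0.
  by apply/matrixP => i l; rewrite !mxE (Huniq _ (Hx _)) (Huniq _ (Hx ord0)) subrr.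
by rewrite mxrank0.
Qed.

Lemma aff_dim_FS2 S O : valid S O -> (1 < #|S|)%N -> aff_dim R n (FS S O) #|S|.-1.
Proof.
move=> Hv HS2.
have [s0 Hs0 Hmax] : exists2 s0, s0 \in S & (ord_max \in S -> s0 = ord_max).
  case: (boolP (ord_max \in S)) => Hm; first by exists ord_max.
  have : (0 < #|S|)%N by lia.
  by case/card_gt0P => s Hs; exists s => // H; rewrite H in Hm.
pose A := S :\ s0.
have HA : #|S|.-1 = #|A|.
  by rewrite (cardsD1 s0 S) Hs0.
rewrite HA.
pose h (i : 'I_#|A|) : I := enum_val i.
have hA i : h i \in A by apply: enum_valP.
have hS i : h i \in S by have := hA i; rewrite in_setD1 => /andP[].
have hs0 i : h i != s0 by have := hA i; rewrite in_setD1 => /andP[].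
have hmax i : h i != ord_max.
  apply/negP => /eqP Hi; have := hs0 i; rewrite Hi Hmax // -Hi; [by rewrite eqxx | exact: hS].
have hinj : injective h by apply: enum_val_inj.
have Hs0m : s0 \notin A by rewrite in_setD1 eqxx.
move: (Hv) => /andP[Hd Hc].
have {Hc}[H1 H2] : (#|O| < k)%N /\ (k < #|O| + #|S|)%N.
  by case/orP: Hc => /andP[]; [lia | move=> _ /andP[]].
pose e : R := #|S|%:R^-1.
have He : 0 < e by rewrite invr_gt0 ltr0n; lia.
have HcgS u : u \in S -> cg S O u = (k - #|O|)%:R * e.
  by move=> Hu; rewrite /cg (disjointFr Hd Hu) Hu.
have Hte1 : e <= (k - #|O|)%:R * e.
  by rewrite -[X in X <= _]mul1r ler_wpM2r ?(ltW He) // ler1n; lia.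
have Hte2 : (k - #|O|)%:R * e + e <= 1.
  rewrite -[X in _ + X]mul1r -mulrDl /e ler_pdivrMr ?ltr0n; last lia.
  by rewrite mul1r natr1 ler_nat; lia.
split.
  pose g (i : 'I_#|A|) (u : I) := cg S O u + e * ((u == h i)%:R - (u == s0)%:R).
  have Hg i : \sum_u g i u = k%:R.
    rewrite big_split /= sum_cg // -mulr_sumr sumrB !sum_delta subrr mulr0 addr0 //.
  pose X (i : 'I_#|A|.+1) : row :=
    if unlift ord0 i is Some i' then rowpt (g i') else center S O.
  exists X; split.
    move=> i; rewrite /X; case: (unlift ord0 i) => [i'|]; last exact: FS_center.
    have Hl := lc_rowpt (Hg i').
    split; [apply/hyp_lc => u | split => u].
    - rewrite Hl /g.
      case: (boolP (u \in S)) => HuS.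
        rewrite HcgS //; case: (boolP (u == h i')) => /eqP Hu1;
        case: (boolP (u == s0)) => /eqP Hu2 /=.
        + by move: (hs0 i'); rewrite -Hu1 Hu2 eqxx.
        + apply/andP; split; lra.
        + apply/andP; split; lra.
        + apply/andP; split; lra.
      have -> : (u == h i') = false by apply/negP => /eqP E; move: HuS; rewrite E hS.
      have -> : (u == s0) = false by apply/negP => /eqP E; move: HuS; rewrite E Hs0.
      rewrite /= subrr mulr0 addr0; have := (@FS_center R n k S O Hv) => -[/hyp_lc Hh _].
      by have := Hh u; rewrite lc_center.
    - move=> HuS HuO; rewrite Hl /g /cg (negbTE HuS) (negbTE HuO).
      have -> : (u == h i') = false by apply/negP => /eqP E; move: HuS; rewrite E hS.
      have -> : (u == s0) = false by apply/negP => /eqP E; move: HuS; rewrite E Hs0.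
      by rewrite /= subrr mulr0 addr0.
    - move=> HuO; rewrite Hl /g /cg HuO.
      have -> : (u == h i') = false by apply/negP => /eqP E; move: (disjointFl Hd HuO); rewrite E hS.
      have -> : (u == s0) = false by apply/negP => /eqP E; move: (disjointFl Hd HuO); rewrite E Hs0.
      by rewrite /= subrr mulr0 addr0.
  set D := \matrix_(i < #|A|) _.
  have HD : D = \matrix_(i, l) (e * ((lift ord_max l == h i)%:R - (lift ord_max l == s0)%:R)).
    apply/matrixP => i l; rewrite !mxE /X liftK unlift_none /center /rowpt !mxE /g; ring.
  apply/eqP; change (row_free D); apply/row_freeP.
  exists (\matrix_(l, i') (e^-1 * (lift ord_max l == h i')%:R)).
  apply/matrixP => i i'; rewrite HD !mxE.
  under eq_bigr do rewrite !mxE.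
  have -> : \sum_l e * ((lift ord_max l == h i)%:R - (lift ord_max l == s0)%:R) *
       (e^-1 * (lift ord_max l == h i')%:R) =
     \sum_l ((lift ord_max l == h i)%:R * (lift ord_max l == h i')%:R -
             (lift ord_max l == s0)%:R * (lift ord_max l == h i')%:R).
    by apply: eq_bigr => l _; rewrite mulrACA divff ?(negbT (gt_eqF He)) // mul1r mulrBl.
  by rewrite sumrB !sum_delta2 // (inj_eq hinj) [s0 == _]eq_sym (negbTE (hs0 i')) subr0.
move=> M x Hx.
pose d (r : 'I_M) (u : I) := lc (x (lift ord0 r)) u - lc (x ord0) u.
pose C : 'M[R]_(#|A|, n) :=
  \matrix_(i, l) ((lift ord_max l == h i)%:R - (lift ord_max l == s0)%:R).
pose U : 'M[R]_(M, #|A|) := \matrix_(r, i) d r (h i).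
have -> : \matrix_(i < M) (x (lift ord0 i) - x ord0) = U *m C.
  apply/matrixP => r l; rewrite !mxE.
  under eq_bigr do rewrite !mxE.
  have Hd0 u : u \notin S -> d r u = 0 by move=> Hu; apply: (FS_diff Hv).
  have Hsum : \sum_(u in A) d r u = - d r s0.
    have : \sum_u d r u = 0.
      by rewrite /d sumrB !sum_lc subrr.
    rewrite (bigID (fun u => u \in S)) /= [X in _ + X]big1; last by move=> u /Hd0.
    rewrite addr0 (bigD1 s0) //= => Hz.
    suff -> : \sum_(u in A) d r u = \sum_(i in S | i != s0) d r i by lra.
    by apply: eq_bigl => u; rewrite in_setD1 andbC.
  have Hsum2 v : \sum_(u in A) d r u * (v == u)%:R = (v \in A)%:R * d r v.
    case: (boolP (v \in A)) => Hv'.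
      rewrite (bigD1 v) //= eqxx mulr1 big1 ?addr0 ?mul1r // => u /andP[_ Hu].
      by rewrite eq_sym (negbTE Hu) mulr0.
    rewrite big1 ?mul0r // => u Hu; have : v != u by apply: contraNneq Hv' => ->.
    by move/negbTE ->; rewrite mulr0.
  have -> : \sum_i d r (h i) * ((lift ord_max l == h i)%:R - (lift ord_max l == s0)%:R) =
      \sum_(u in A) d r u * (lift ord_max l == u)%:R - (lift ord_max l == s0)%:R * \sum_(u in A) d r u.
    rewrite (big_enum_val (fun u => d r u * (lift ord_max l == u)%:R)) /=.
    rewrite (big_enum_val (fun u => d r u)) /= mulr_sumr -sumrB.
    by apply: eq_bigr => i _; rewrite /h; ring.
  rewrite Hsum2 Hsum -(lc_lift k (x (lift ord0 r))) -(lc_lift k (x ord0)) -/(d r _).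
  set v := lift ord_max l.
  case: (boolP (v == s0)) => [/eqP ->|Hvs].
    by rewrite (negbTE Hs0m) /=; ring.
  case: (boolP (v \in A)) => HvA /=; first ring.
  rewrite Hd0; first ring.
  by apply: contraNN HvA => HvS; rewrite in_setD1 Hvs.
by apply: leq_trans (mxrankM_maxr _ _) (rank_leq_row _).
Qed.

End Dim.



Section Char.
Variables (R : realType) (n k : nat).
Notation I := 'I_n.+1.
Notation row := 'rV[R]_n.
Notation lc := (lc k).
Notation hyp := (hypersimplex R n k).
Notation FS := (@FS R n k).
Notation center := (@center R n k).
Notation cg := (@cg R n k).
Notation valid := (@valid n k).

Lemma sum_pos_lt (S : {set I}) (f : I -> R) : S != set0 ->
  (forall i, i \in S -> 0 < f i < 1) -> 0 < \sum_(i in S) f i < #|S|%:R.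
Proof.
move=> /set0Pn [s Hs] Hf.
have H1 (g : I -> R) : (forall i, i \in S -> 0 < g i) -> 0 < \sum_(i in S) g i.
  move=> Hg; rewrite (bigD1 s) //=; apply: ltr_wpDr; last exact: Hg.
  by apply: sumr_ge0 => i /andP[Hi _]; apply: ltW; apply: Hg.
apply/andP; split.
  by apply: H1 => i /Hf /andP[].
rewrite -subr_gt0 -[_%:R]mulr1n -sumr_const -sumrB; apply: H1 => i /Hf /andP[_ ?].
by rewrite subr_gt0.
Qed.

Lemma face_char (F : row -> Prop) : is_face R n hyp F -> (exists x, F x) ->
  exists S O, valid S O /\ (forall x, F x <-> FS S O x).
Proof.
move=> [a [b [Hab HF]]] [x0 Fx0].
pose Zf := [set i : I | `[< forall x, F x -> lc x i = 0 >]].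
pose Of := [set i : I | `[< forall x, F x -> lc x i = 1 >]].
pose Sf := ~: (Zf :|: Of).
have HZ i x : i \in Zf -> F x -> lc x i = 0.
  by rewrite inE => /asboolP H /H.
have HO i x : i \in Of -> F x -> lc x i = 1.
  by rewrite inE => /asboolP H /H.
have HZO i : i \in Zf -> i \in Of -> False.
  by move=> H1 H2; have := HZ i x0 H1 Fx0; rewrite (HO i x0 H2 Fx0); lra.
have Fhyp x : F x -> hyp x by move/HF => [].
have Frange x i : F x -> 0 <= lc x i <= 1 by move/Fhyp/hyp_lc; apply.
have wZ i : exists y, F y /\ (i \notin Zf -> lc y i != 0).
  case: (boolP (i \in Zf)) => Hi; first by exists x0.
  have : ~ (forall x, F x -> lc x i = 0) by move=> H; move: Hi; rewrite inE; move/asboolP.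
  move/existsNP => [y /not_implyP [Fy Hy]]; exists y; split => // _; exact/eqP.
have wO i : exists y, F y /\ (i \notin Of -> lc y i != 1).
  case: (boolP (i \in Of)) => Hi; first by exists x0.
  have : ~ (forall x, F x -> lc x i = 1) by move=> H; move: Hi; rewrite inE; move/asboolP.
  move/existsNP => [y /not_implyP [Fy Hy]]; exists y; split => // _; exact/eqP.
have [yZ HyZ] := choice wZ.
have [yO HyO] := choice wO.
pose Y (t : I * bool) : row := if t.2 then yZ t.1 else yO t.1.
have FY t : F (Y t) by rewrite /Y; case: t.2; [case: (HyZ t.1) | case: (HyO t.1)].
pose N := #|{: I * bool}|.
have HN : (0 < N)%N by rewrite /N card_prod card_ord card_bool.
have HNr : 0 < N%:R :> R by rewrite ltr0n.
pose c : R := N%:R^-1.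
have Hc : c * N%:R = 1 by rewrite mulVf // gt_eqF.
have Hc0 : 0 < c by rewrite invr_gt0.
pose p : row := c *: \sum_t Y t.
have lcp i : lc p i = c * \sum_t lc (Y t) i by apply: lc_avg.
have Hsum_ub i : \sum_t lc (Y t) i <= N%:R.
  have -> : N%:R = \sum_(t : I * bool) (1 : R) by rewrite sumr_const.
  by apply: ler_sum => t _; have /andP[] := Frange _ i (FY t).
have Hsum_lb i : 0 <= \sum_t lc (Y t) i.
  by apply: sumr_ge0 => t _; have /andP[] := Frange _ i (FY t).
have Fp : F p.
  apply/HF; split.
    apply/hyp_lc => i; rewrite lcp; apply/andP; split.
      by apply: mulr_ge0 => //; apply: ltW.
    rewrite -Hc; apply: ler_wpM2l; [exact: ltW | exact: Hsum_ub].
  rewrite /p dotv_avg.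
  have -> : \sum_t dotv R n a (Y t) = \sum_(t : I * bool) b.
    by apply: eq_bigr => t _; have /HF [_ ->] := FY t.
  by rewrite sumr_const -mulr_natr mulrCA Hc mulr1.
have Hint i : i \in Sf -> 0 < lc p i < 1.
  rewrite !inE negb_or => /andP[HiZ HiO]; rewrite lcp; apply/andP; split.
    apply: mulr_gt0 => //; rewrite (bigD1 (i, true)) //=.
    apply: ltr_pwDl; last by apply: sumr_ge0 => t _; have /andP[] := Frange _ i (FY t).
    have [_ H] := HyZ i; have /andP[H0 _] := Frange _ i (FY (i, true)).
    have H2 : i \notin Zf by rewrite inE.
    by move: H0; rewrite /Y /= lt_def (H H2) => ->.
  rewrite -Hc ltr_pM2l //.
  have -> : N%:R = \sum_(t : I * bool) (1 : R) by rewrite sumr_const.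
  rewrite [X in X < _](bigD1 (i, false)) //= [X in _ < X](bigD1 (i, false)) //=.
  apply: ltr_leD.
    have [_ H] := HyO i; have /andP[_ H1] := Frange _ i (FY (i, false)).
    have H2 : i \notin Of by rewrite inE.
    by move: H1; rewrite /Y /= lt_def eq_sym (H H2) => ->.
  by apply: ler_sum => t _; have /andP[] := Frange _ i (FY t).
pose eps := \big[Order.min/1]_(i | i \in Sf) Order.min (lc p i) (1 - lc p i).
have Heps0 : 0 < eps.
  apply: (big_ind (fun v => 0 < v)) => //; first by move=> u v Hu Hv; rewrite lt_min Hu Hv.
  by move=> i /Hint /andP[H1 H2]; rewrite lt_min H1 subr_gt0 H2.
have Heps i : i \in Sf -> eps <= lc p i /\ eps <= 1 - lc p i.
  move=> Hi; have := bigmin_le_cond 1 (fun i => Order.min (lc p i) (1 - lc p i)) Hi.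
  rewrite -/eps => H; split; apply: le_trans H _; by rewrite ge_min lexx ?orbT.
exists Sf, Of; split.
  apply/andP; split.
    by rewrite disjoints_subset /Sf setCU subIset // orbC subxx.
  have Hk : k%:R = #|Of|%:R + \sum_(i in Sf) lc p i :> R.
    rewrite -(sum_lc k p) (bigID (fun i => i \in Of)) /=.
    have -> : \sum_(i | i \in Of) lc p i = #|Of|%:R.
      rewrite (eq_bigr (fun _ => 1)) ?sumr_const // => i Hi; exact: HO.
    congr (_ + _); rewrite [in LHS](bigID (fun i => i \in Sf)) /=.
    rewrite [X in _ + X]big1 ?addr0.
      apply: eq_bigl => i; rewrite andbC; case: (boolP (i \in Sf)) => //=.
      by rewrite in_setC in_setU negb_or => /andP[].
    by move=> i /andP[HiO HiS]; apply: (HZ i p) => //; move: HiS; rewrite in_setC in_setU negb_or (negbTE HiO) andbT negbK.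
  case: (boolP (Sf == set0)) => [/eqP HS0 | HSn].
    apply/orP; left; rewrite HS0 cards0 eqxx /=.
    by move: Hk; rewrite HS0 big_set0 addr0 => /eqP; rewrite eqr_nat eq_sym.
  have := sum_pos_lt HSn Hint; rewrite -/Sf => /andP[Hlo Hhi].
  have H1 : (#|Of| < k)%N by rewrite -(ltr_nat R) Hk ltrDl.
  have H2 : (k < #|Of| + #|Sf|)%N by rewrite -(ltr_nat R) natrD Hk ltrD2l.
  apply/orP; right; rewrite H1 H2 andbT /=.
  case: (ltnP 1 #|Sf|) => // Hs1.
  have HS1 : #|Sf| = 1%N by move: HSn; rewrite -card_gt0; lia.
  by exfalso; rewrite HS1 in H2; lia.
move=> y; split.
  move=> Fy; split; first exact: Fhyp.
  split.
    move=> i HiS HiO; apply: (HZ i y) => //.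
    by move: HiS; rewrite in_setC in_setU negb_or (negbTE HiO) andbT negbK.
  by move=> i Hi; apply: HO.
move=> [Hy [Hy0 Hy1]].
have Hyb : dotv R n a y <= b by apply: Hab.
pose q : row := (1 + eps) *: p + (- eps) *: y.
have lcq i : lc q i = (1 + eps) * lc p i + (- eps) * lc y i.
  by apply: lc_comb2; ring.
have Hq : hyp q.
  apply/hyp_lc => i; rewrite lcq.
  case: (boolP (i \in Of)) => HiO.
    by rewrite (HO i p HiO Fp) Hy1 //; apply/andP; lra.
  case: (boolP (i \in Sf)) => HiS.
    have [He1 He2] := Heps i HiS.
    have /andP[Hv0 Hv1] : 0 <= lc y i <= 1 by move/hyp_lc: Hy; apply.
    apply/andP; split; nra.
  have HiZ : i \in Zf by move: HiS; rewrite in_setC in_setU negb_or (negbTE HiO) andbT negbK.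
  rewrite Hy0 // (HZ i p HiZ Fp); apply/andP; lra.
have := Hab q Hq; rewrite dotv_comb2.
have /HF [_ ->] := Fp.
move=> Hle; apply/HF; split => //; nra.
Qed.

End Char.



Lemma num_sets_fin (U : Type) (T : finType) (V : {set T}) (E : T -> U -> Prop)
   (Q : (U -> Prop) -> Prop) :
  (forall t, t \in V -> Q (E t)) ->
  (forall t t', t \in V -> t' \in V -> (forall x, E t x <-> E t' x) -> t = t') ->
  (forall F, Q F -> exists2 t, t \in V & forall x, F x <-> E t x) ->
  num_sets U Q #|V|.
Proof.
move=> HQ Hinj Hsurj.
exists (fun i => E (enum_val i)); split; [|split].
- by move=> i; apply: HQ; apply: enum_valP.
- by move=> i i' H; apply: enum_val_inj; apply: Hinj => //; apply: enum_valP.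
- move=> F /Hsurj [t Ht HF]; exists (enum_rank_in Ht t) => x.
  by rewrite enum_rankK_in.
Qed.

Section Count.
Variables (R : realType) (n k : nat).
Notation I := 'I_n.+1.
Notation row := 'rV[R]_n.
Notation lc := (lc k).
Notation hyp := (hypersimplex R n k).
Notation FS := (@FS R n k).
Notation center := (@center R n k).
Notation cg := (@cg R n k).
Notation valid := (@valid n k).

Lemma aff_dim_ext (F G : row -> Prop) j : (forall x, F x <-> G x) ->
  aff_dim R n F j -> aff_dim R n G j.
Proof.
move=> H [[x [Hx Hr]] Hb]; split.
  by exists x; split => // i; apply/H.
by move=> m y Hy; apply: Hb => i; apply/H.
Qed.

Lemma valid_dim S O : valid S O -> aff_dim R n (FS S O) #|S|.-1.
Proof.
move=> Hv; case: (posnP #|S|) => H0.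
  by rewrite H0; apply: (@aff_dim_FS0 R n k).
apply: (@aff_dim_FS2 R n k) => //; move: (Hv) => /andP[_ /orP[/andP[/eqP H _]|/andP[]//]].
by rewrite H in H0.
Qed.

Lemma valid_jface S O : valid S O -> j_face R n hyp #|S|.-1 (FS S O).
Proof. by move=> Hv; split; [apply: FS_face | apply: valid_dim]. Qed.

Lemma jface_char j F : j_face R n hyp j F ->
  exists S O, [/\ valid S O, #|S|.-1 = j & forall x, F x <-> FS S O x].
Proof.
move=> [Hf Hd].
have Hne : exists x, F x by case: Hd => [[x [Hx _]] _]; exists (x ord0).
have [S [O [Hv HF]]] := face_char Hf Hne.
exists S, O; split => //.
apply: (aff_dim_uniq (valid_dim Hv)).
by apply: aff_dim_ext Hd.
Qed.

Lemma center_in S O S' O' : valid S O -> FS S' O' (center S O) ->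
  {subset O' <= O} /\ (forall i, i \notin S' -> i \notin O' -> (i \notin S) && (i \notin O)).
Proof.
move=> Hv [_ [H0 H1]]; split.
  by move=> i Hi; have [<- _] := @center_pat R n k S O i Hv; rewrite H1.
by move=> i Hs Ho; have [_ <-] := @center_pat R n k S O i Hv; rewrite H0.
Qed.

Lemma FS_inj S O S' O' : valid S O -> valid S' O' ->
  FS S' O' (center S O) -> FS S O (center S' O') -> (S, O) = (S', O').
Proof.
move=> Hv Hv' H1 H2.
have [A1 B1] := center_in Hv H1.
have [A2 B2] := center_in Hv' H2.
have EO : O = O' by apply/setP => i; apply/idP/idP => [/A2|/A1].
subst O'.
have [/andP[Hd _] /andP[Hd' _]] := (Hv, Hv').
congr (_, _); apply/setP => i.
case: (boolP (i \in O)) => Hi.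
  by rewrite (disjointFl Hd Hi) (disjointFl Hd' Hi).
apply/idP/idP => Hs; apply/negPn/negP => Hn.
  by have /andP[] := B1 i Hn Hi; rewrite Hs.
by have /andP[] := B2 i Hn Hi; rewrite Hs.
Qed.

Definition Vset (j : nat) : {set {set I} * {set I}} :=
  [set t | valid t.1 t.2 && (#|t.1|.-1 == j)].

Definition Vhset (j : nat) : {set {set I} * {set I}} :=
  [set t in Vset j | ord_max \notin t.2].

Lemma count_faces j : num_sets _ (j_face R n hyp j) #|Vset j|.
Proof.
apply: (num_sets_fin (E := fun t => FS t.1 t.2)).
- move=> [S O]; rewrite inE /= => /andP[Hv /eqP <-]; exact: valid_jface.
- move=> [S O] [S' O']; rewrite !inE /= => /andP[Hv _] /andP[Hv' _] H.
  apply: FS_inj => //; [apply/H | apply/H]; exact: FS_center.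
- move=> F /jface_char [S [O [Hv Hj HF]]]; exists (S, O) => //.
  by rewrite inE /= Hv Hj eqxx.
Qed.

Lemma center_ho S O : valid S O -> ord_max \notin O ->
  half_open_hypersimplex R n k (center S O).
Proof.
move=> Hv HO; apply/ho_lc; have [Hh _] := @FS_center R n k S O Hv; split => //.
have [Heq _] := @center_pat R n k S O ord_max Hv.
have /andP[_ H1] := (iffLR (hyp_lc k (center S O)) Hh) ord_max.
by rewrite lt_def H1 andbT eq_sym Heq.
Qed.

Lemma count_ho j : num_sets _ (ho_j_face R n k j) #|Vhset j|.
Proof.
apply: (num_sets_fin (E := fun t x => FS t.1 t.2 x /\ half_open_hypersimplex R n k x)).
- move=> [S O]; rewrite !inE /= => /andP[/andP[Hv /eqP <-] HO].
  exists (FS S O); split; first exact: valid_jface.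
  split => //; exists (center S O); split; [exact: FS_center | exact: center_ho].
- move=> [S O] [S' O']; rewrite !inE /= => /andP[/andP[Hv _] HO] /andP[/andP[Hv' _] HO'] H.
  apply: FS_inj => //.
    by apply: (proj1 (proj1 (H _) _)); split; [exact: FS_center | exact: center_ho].
  by apply: (proj1 (proj2 (H _) _)); split; [exact: FS_center | exact: center_ho].
- move=> G [F [Hj [[x [Fx Hx]] HG]]].
  have [S [O [Hv Hjj HF]]] := jface_char Hj.
  exists (S, O).
    rewrite !inE /= Hv Hjj eqxx /=; apply/negP => HO.
    have [_ [_ H1]] := (iffLR (HF x) Fx).
    have [_ H2] := (iffLR (ho_lc k x) Hx).
    by move: H2; rewrite H1 // ltxx.
  move=> y; rewrite HG; split => -[H1 H2]; split => //; apply/HF => //.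
Qed.

End Count.

Local Close Scope ring_scope.

Section K.
Variable T : finType.

Lemma card_sum (U : finType) (P : pred U) : #|[set x | P x]| = \sum_x P x.
Proof.
rewrite -sum1_card big_mkcond /=; apply: eq_bigr => x _; rewrite inE; by case: (P x).
Qed.

Lemma sum_range (lo hi c : nat) : \sum_(lo <= s < hi) (c == s) = (lo <= c < hi).
Proof.
elim: hi => [|hi IH]; first by rewrite big_geq // ltn0 andbF.
case: (leqP lo hi) => Hl.
  rewrite big_nat_recr //= IH.
  case: (ltngtP c hi) => Hc.
  - by rewrite andbT addn0 ltnS (ltnW Hc) andbT.
  - by rewrite andbF addn0 ltnS (leqNgt c) Hc andbF.
  - by rewrite Hc ltnSn Hl.
rewrite big_geq //.
by case: andP => // -[H1 H2]; lia.
Qed.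

Lemma card_range (A : {set T}) lo hi :
  #|[set O : {set T} | (O \subset A) && (lo <= #|O| < hi)]| = \sum_(lo <= s < hi) 'C(#|A|, s).
Proof.
rewrite card_sum.
have -> : \sum_(O : {set T}) ((O \subset A) && (lo <= #|O| < hi)) =
          \sum_(O : {set T}) \sum_(lo <= s < hi) ((O \subset A) && (#|O| == s)).
  apply: eq_bigr => O _; case: (O \subset A) => /=; last by rewrite big1.
  by rewrite sum_range.
rewrite exchange_big /=; apply: eq_bigr => s _.
by rewrite -cards_draws card_sum.
Qed.

Lemma card_pairs (P : pred {set T}) (Q : {set T} -> pred {set T}) :
  #|[set t : {set T} * {set T} | P t.1 && Q t.1 t.2]| =
  \sum_(S | P S) #|[set O | Q S O]|.
Proof.
rewrite card_sum.
have -> : \sum_(t : {set T} * {set T}) (P t.1 && Q t.1 t.2) =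
          \sum_(S : {set T}) \sum_(O : {set T}) (P S && Q S O).
  by rewrite (pair_big xpredT xpredT (fun S O => (P S && Q S O) : nat)).
rewrite [RHS]big_mkcond /=; apply: eq_bigr => S _; rewrite card_sum.
by case: (P S) => //=; rewrite big1.
Qed.

Lemma card_add1 (A : {set T}) x (C : nat -> bool) : x \in A ->
  #|[set O : {set T} | [&& O \subset A, x \in O & C #|O|]]| =
  #|[set O : {set T} | (O \subset A :\ x) && C #|O|.+1]|.
Proof.
move=> HxA.
set D := [set O : {set T} | (O \subset A :\ x) && C #|O|.+1].
have HxD O : O \in D -> x \notin O.
  rewrite inE => /andP[H _]; apply/negP => Hx; have := subsetP H x Hx.
  by rewrite in_setD1 eqxx.
suff -> : [set O : {set T} | [&& O \subset A, x \in O & C #|O|]] = (fun O => x |: O) @: D.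
  apply: card_in_imset.
  move=> O1 O2 H1 H2 /= E.
  by rewrite -(setU1K (HxD _ H1)) -(setU1K (HxD _ H2)) E.
apply/setP => O; rewrite inE; apply/idP/idP.
    move=> /and3P[HOA HxO HC]; apply/imsetP; exists (O :\ x); last by rewrite setD1K.
    rewrite inE (setSD _ HOA) /=; move: HC; by rewrite (cardsD1 x O) HxO.
  move=> /imsetP [O' HO' ->]; have Hx' := HxD _ HO'; move: HO'; rewrite inE => /andP[H1 H2].
  rewrite subUset sub1set HxA setU11 cardsU1 Hx' /= add1n H2 andbT.
by apply: subset_trans H1 (subD1set _ _).
Qed.

End K.


Section Comb.
Variables (n k : nat).
Notation I := 'I_n.+1.

Lemma cardC_ord (S : {set I}) : #|~: S| = n.+1 - #|S|.
Proof. have := cardsC S; rewrite card_ord; lia. Qed.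

Lemma count_V j : (1 <= j)%N ->
  #|Vset n k j| = ('C(n.+1, j.+1) * \sum_(k - j <= s < k) 'C(n - j, s))%N.
Proof.
move=> Hj.
have -> : Vset n k j = [set t : {set I} * {set I} | (#|t.1| == j.+1) &&
     ((t.2 \subset ~: t.1) && (k - j <= #|t.2| < k))].
  apply/setP => -[S O]; rewrite !inE /= /valid disjoint_sym disjoints_subset.
  case: (O \subset ~: S) => /=; lia.
rewrite (card_pairs (fun S => #|S| == j.+1) (fun S O => (O \subset ~: S) && (k - j <= #|O| < k))).
have -> : \sum_(S : {set I} | #|S| == j.+1)
    #|[set O : {set I} | (O \subset ~: S) && (k - j <= #|O| < k)]| =
    \sum_(S in [set S : {set I} | #|S| == j.+1]) \sum_(k - j <= s < k) 'C(n - j, s).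
  apply: eq_big => [S|S /eqP HS]; first by rewrite inE.
  by rewrite card_range cardC_ord HS subSS.
by rewrite sum_nat_const card_draws card_ord.
Qed.

Lemma count_V0 : (0 < k <= n)%N -> #|Vset n k 0| = ('C(n, k) + 'C(n, k.-1))%N.
Proof.
move=> Hk.
have -> : Vset n k 0 = [set t : {set I} * {set I} | (#|t.1| == 0%N) &&
     ((t.2 \subset ~: t.1) && (#|t.2| == k))].
  apply/setP => -[S O]; rewrite !inE /= /valid disjoint_sym disjoints_subset.
  case: (O \subset ~: S) => /=; [lia|by rewrite !andbF].
rewrite (card_pairs (fun S => #|S| == 0%N) (fun S O => (O \subset ~: S) && (#|O| == k))).
have -> : \sum_(S : {set I} | #|S| == 0%N) #|[set O : {set I} | (O \subset ~: S) && (#|O| == k)]| =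
    \sum_(S in [set S : {set I} | #|S| == 0%N]) 'C(n.+1, k).
  apply: eq_big => [S|S /eqP HS]; first by rewrite inE.
  by rewrite cards_draws cardC_ord HS subn0.
rewrite sum_nat_const card_draws card_ord bin0 mul1n.
by case: k Hk => // k' _; rewrite binS.
Qed.

Lemma count_Vh j : (1 <= j)%N ->
  #|Vset n k j| = (#|Vhset n k j| + 'C(n, j.+1) * \sum_(k.-1 - j <= s < k.-1) 'C(n - j - 1, s))%N.
Proof.
move=> Hj.
rewrite -(cardsID [set t : {set I} * {set I} | ord_max \notin t.2] (Vset n k j)).
congr (_ + _)%N.
  by apply: eq_card => t; rewrite !inE.
have -> : Vset n k j :\: [set t : {set I} * {set I} | ord_max \notin t.2] =
   [set t : {set I} * {set I} | ((#|t.1| == j.+1) && (ord_max \notin t.1)) &&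
     [&& t.2 \subset ~: t.1, ord_max \in t.2 & (k - j <= #|t.2| < k)]].
  apply/setP => -[S O]; rewrite !inE /= /valid disjoint_sym disjoints_subset negbK.
  case: (boolP (ord_max \in O)) => HO; last by rewrite !andbF.
  case: (boolP (O \subset ~: S)) => HOS /=.
    have -> : (ord_max \in S) = false.
      by apply/negbTE; have := subsetP HOS _ HO; rewrite inE.
    rewrite andbT; lia.
  by rewrite !andbF.
rewrite (card_pairs (fun S => (#|S| == j.+1) && (ord_max \notin S)) (fun S O => [&& O \subset ~: S, ord_max \in O & (k - j <= #|O| < k)])).
have -> : \sum_(S : {set I} | (#|S| == j.+1) && (ord_max \notin S))
    #|[set O : {set I} | [&& O \subset ~: S, ord_max \in O & (k - j <= #|O| < k)]]| =
    \sum_(S in [set S : {set I} | (S \subset ~: [set ord_max]) && (#|S| == j.+1)])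
      \sum_(k.-1 - j <= s < k.-1) 'C(n - j - 1, s).
  apply: eq_big => [S|S /andP[/eqP HS HmS]].
    by rewrite !inE subsetC sub1set inE andbC.
  rewrite (@card_add1 _ (~: S) ord_max (fun m => k - j <= m < k)); last by rewrite inE.
  have -> : [set O : {set I} | (O \subset ~: S :\ ord_max) && (k - j <= #|O|.+1 < k)] =
            [set O : {set I} | (O \subset ~: S :\ ord_max) && (k.-1 - j <= #|O| < k.-1)].
    apply/setP => O; rewrite !inE; case: (O \subset _) => //=; lia.
  rewrite card_range; apply: eq_bigr => s _; congr 'C(_, _).
  have := cardsD1 ord_max (~: S); rewrite inE HmS cardC_ord HS /=; move=> E; apply/eqP; rewrite -(eqn_add2l 1); apply/eqP.
  transitivity (n.+1 - j.+1)%N; [by rewrite E | lia].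
rewrite sum_nat_const cards_draws cardsC1 card_ord /=.
done.
Qed.

End Comb.


Theorem corollary1p4 (R : realType) (n k : nat) :
  (0 < k <= n)%N ->
  num_sets _ (j_face R n (hypersimplex R n k) 0) ('C(n, k) + 'C(n, k.-1))%N /\
  (forall j : nat, (1 <= j <= n)%N ->
     exists a b : nat,
       num_sets _ (j_face R n (hypersimplex R n k) j) a /\
       num_sets _ (ho_j_face R n k j) b /\
       a = (b + 'C(n, j.+1) * \sum_(k.-1 - j <= s < k.-1) 'C(n - j - 1, s))%N /\
       a = ('C(n.+1, j.+1) * \sum_(k - j <= s < k) 'C(n - j, s))%N).
Proof.
move=> Hk; split.
  by rewrite -count_V0 //; apply: count_faces.
move=> j /andP[Hj _].
exists #|Vset n k j|, #|Vhset n k j|; split; first exact: count_faces.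
split; first exact: count_ho.
by split; [apply: count_Vh | apply: count_V].
Qed.
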